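(* Let $(D,\prec,\succ,d)$ be a commutative differential dendriform algebra of weight zero. Define, for $a,b\in D$, $$a\lhd b:=a\prec d(b)\;(=d(b)\succ a),\qquad a\rhd b:=d(b)\prec a\;(=a\succ d(b)).$$ Then $(D,\lhd,\rhd)$ is a pre-Novikov algebra. Moreover, with $a\circ b:=a\lhd b+a\rhd b=a\prec d(b)+d(b)\prec a$, the pair $(D,\circ)$ is a Novikov algebra.
   Context: $\mathbf{k}$ is a commutative unital ring. A dendriform algebra is a $\mathbf{k}$-module $D$ with bilinear operations $\prec,\succ$ such that for all $a,b,c\in D$: $(a\prec b)\prec c=a\prec(b\prec c+b\succ c)$, $(a\succ b)\prec c=a\succ(b\prec c)$, $(a\prec b+a\succ b)\succ c=a\succ(b\succ c)$. It is commutative if $a\succ b=b\prec a$ for all $a,b$. A derivation of weight $\lambda$ on it is a linear map $d$ with $d(a\prec b)=d(a)\prec b+a\prec d(b)+\lambda d(a)\prec d(b)$ and $d(a\succ b)=d(a)\succ b+a\succ d(b)+\lambda d(a)\succ d(b)$ for all $a,b$; then $(D,\prec,\succ,d)$ is a differential dendriform algebra of weight $\lambda$, called commutative if $(D,\prec,\succ)$ is commutative. A pre-Novikov algebra is a $\mathbf{k}$-module $N$ with bilinear operations $\lhd,\rhd$ such that for all $a,b,c\in N$: $(a\lhd b)\lhd c-a\lhd(b\rhd c+b\lhd c)=(b\rhd a)\lhd c-b\rhd(a\lhd c)$; $(a\rhd b+a\lhd b)\rhd c-a\rhd(b\rhd c)=(b\rhd a+b\lhd a)\rhd c-b\rhd(a\rhd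 c)$; $(a\lhd b)\lhd c=(a\lhd c)\lhd b$; $(a\rhd b+a\lhd b)\rhd c=(a\rhd c)\lhd b$. A (left) Novikov algebra is a $\mathbf{k}$-module $N$ with a bilinear operation $\circ$ such that $(a\circ b)\circ c=(a\circ c)\circ b$ and $(a\circ b)\circ c-a\circ(b\circ c)=(b\circ a)\circ c-b\circ(a\circ c)$ for all $a,b,c$. *)

(* Defs.v *)
From mathcomp Require Import all_boot all_algebra.
Set Implicit Arguments. Unset Strict Implicit. Unset Printing Implicit Defensive.
Import GRing.Theory.
Local Open Scope ring_scope.

Definition bilinear_op (k : comPzRingType) (D : lmodType k) (op : D -> D -> D) : Prop :=
  (forall a b c : D, op (a + b) c = op a c + op b c) /\
  (forall a b c : D, op a (b + c) = op a b + op a c) /\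
  (forall (r : k) (a b : D), op (r *: a) b = r *: op a b) /\
  (forall (r : k) (a b : D), op a (r *: b) = r *: op a b).

Definition linear_map (k : comPzRingType) (D : lmodType k) (f : D -> D) : Prop :=
  (forall a b : D, f (a + b) = f a + f b) /\
  (forall (r : k) (a : D), f (r *: a) = r *: f a).

Definition dendriform (k : comPzRingType) (D : lmodType k) (pr su : D -> D -> D) : Prop :=
  bilinear_op pr /\ bilinear_op su /\
  (forall a b c : D, pr (pr a b) c = pr a (pr b c + su b c)) /\
  (forall a b c : D, pr (su a b) c = su a (pr b c)) /\
  (forall a b c : D, su (pr a b + su a b) c = su a (su b c)).

Definition commutative_dendriform (k : comPzRingType) (D : lmodType k) (pr su : D -> D -> D) : Prop :=
  dendriform pr su /\ (forall a b : D, su a b = pr b a).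

Definition dend_derivation (k : comPzRingType) (D : lmodType k) (lambda : k)
    (pr su : D -> D -> D) (d : D -> D) : Prop :=
  linear_map d /\
  (forall a b : D, d (pr a b) = pr (d a) b + pr a (d b) + lambda *: pr (d a) (d b)) /\
  (forall a b : D, d (su a b) = su (d a) b + su a (d b) + lambda *: su (d a) (d b)).

Definition pre_novikov (k : comPzRingType) (D : lmodType k) (lt rt : D -> D -> D) : Prop :=
  bilinear_op lt /\ bilinear_op rt /\
  (forall a b c : D, lt (lt a b) c - lt a (rt b c + lt b c) = lt (rt b a) c - rt b (lt a c)) /\
  (forall a b c : D, rt (rt a b + lt a b) c - rt a (rt b c)
                     = rt (rt b a + lt b a) c - rt b (rt a c)) /\
  (forall a b c : D, lt (lt a b) c = lt (lt a c) b) /\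
  (forall a b c : D, rt (rt a b + lt a b) c = lt (rt a c) b).

Definition novikov (k : comPzRingType) (D : lmodType k) (o : D -> D -> D) : Prop :=
  bilinear_op o /\
  (forall a b c : D, o (o a b) c = o (o a c) b) /\
  (forall a b c : D, o (o a b) c - o a (o b c) = o (o b a) c - o b (o a c)).

(* Main.v *)
Require Import Defs.
From mathcomp Require Import all_boot all_algebra.
Import GRing.Theory.
Local Open Scope ring_scope.

Lemma zmod_re (V : zmodType) (u v R w y z : V) :
  (u + v + R) - (w + y + z) = (u - w) + (R - y) + (v - z).
Proof.
rewrite !opprD !addrA (addrAC _ R (-w)) (addrAC u v (-w)) (addrAC (u-w) v R).
by rewrite (addrAC _ v (-y)).
Qed.

Lemma prenov_nov (k : comPzRingType) (D : lmodType k) (lt rt : D -> D -> D) :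
  pre_novikov lt rt -> novikov (fun a b => lt a b + rt a b).
Proof.
move=> [[l1 [l2 [l3 l4]]] [[r1 [r2 [r3 r4]]] [H1 [H2 [H3 H4]]]]].
split.
  split; first by move=> a b c; rewrite l1 r1 addrACA.
  split; first by move=> a b c; rewrite l2 r2 addrACA.
  split; first by move=> r a b; rewrite l3 r3 scalerDr.
  by move=> r a b; rewrite l4 r4 scalerDr.
split.
  have F : forall a b c, lt (lt a b + rt a b) c + rt (lt a b + rt a b) c
     = lt (lt a b) c + (lt (rt a b) c + lt (rt a c) b).
    by move=> a b c; rewrite {2}(addrC (lt a b) (rt a b)) H4 l1 -addrA.
  move=> a b c.
  by rewrite /= !F H3 (addrC (lt (rt a b) c)).
move=> a b c.
have E : forall a b, (lt a b + rt a b) = rt a b + lt a b by move=> ? ?; rewrite addrC.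
have K : forall a b,
  lt (lt a b + rt a b) c + rt (lt a b + rt a b) c - (lt a (lt b c + rt b c) + rt a (lt b c + rt b c))
  = (lt (rt b a) c - rt b (lt a c)) + (rt (rt a b + lt a b) c - rt a (rt b c))
    + (lt (rt a b) c - rt a (lt b c)).
  move=> x y.
  rewrite (l1 (lt x y)) (addrC (lt x y) (rt x y)) (addrC (lt y c) (rt y c)).
  by rewrite (r2 x (rt y c)) (addrA (lt x _)) zmod_re H1.
rewrite K K H2.
by rewrite addrAC [X in X + _ = _]addrC addrAC.
Qed.

Theorem proposition3p15 (k : comPzRingType) (D : lmodType k)
    (pr su : D -> D -> D) (d : D -> D) :
  commutative_dendriform pr su ->
  dend_derivation 0 pr su d ->
  pre_novikov (fun a b => pr a (d b)) (fun a b => pr (d b) a) /\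
  novikov (fun a b => pr a (d b) + pr (d b) a).
Proof.
move=> [[[p1 [p2 [p3 p4]]] [_ [A1 [A2 _]]]] C] [[dD dZ] [dP _]].
have dP' : forall a b, d (pr a b) = pr (d a) b + pr a (d b).
  by move=> a b; rewrite dP scale0r addr0.
have A2' : forall x y z, pr (pr x y) z = pr (pr x z) y.
  by move=> x y z; have := A2 y x z; rewrite !C.
have A1' : forall x y z, pr (pr x y) z = pr x (pr y z + pr z y).
  by move=> x y z; rewrite A1 C.
have PN : pre_novikov (fun a b => pr a (d b)) (fun a b => pr (d b) a).
  split.
    split; first by move=> a b c; rewrite p1.
    split; first by move=> a b c; rewrite dD p2.
    split; first by move=> r a b; rewrite p3.
    by move=> r a b; rewrite dZ p4.
  split.
    split; first by move=> a b c; rewrite p2.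
    split; first by move=> a b c; rewrite dD p1.
    split; first by move=> r a b; rewrite p4.
    by move=> r a b; rewrite dZ p3.
  split.
    move=> a b c /=.
    rewrite dD !dP' [pr (d b) (d c) + _]addrC addrACA p2 -!A1' (A2' a (d c)).
    rewrite [X in _ - X]addrC opprD addrA subrr sub0r.
    by rewrite p1 (A2' (d a) b) opprD addrA subrr sub0r.
  split.
    move=> a b c /=.
    have S : forall x u : D, x - (u + x) = - u.
      by move=> x u; rewrite opprD addrCA subrr addr0.
    by rewrite -!A1' !dP' !p1 !S A2'.
  split.
    by move=> a b c /=; rewrite A2'.
  by move=> a b c /=; rewrite addrC -A1'.
split=> //.
exact (@prenov_nov k D _ _ PN).
Qed.
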